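(* Let $z\in\mathbb{R}^n$ satisfy $\dim\big(\Diamond_n\cap(z+\Diamond_n)\big)=n$. Then there exists $\epsilon>0$ such that $\mathcal{N}\big(\Diamond_n\cap(\lambda z+\Diamond_n)\big)=\mathcal{N}\big(\Diamond_n\cap(z+\Diamond_n)\big)$ for all $\lambda\in(1-\epsilon,1+\epsilon)$.
   Context: $\Diamond_n=\operatorname{conv}(\pm e_1,\ldots,\pm e_n)\subset\mathbb{R}^n$. For an $n$-dimensional polytope $P\subset\mathbb{R}^n$, its normal fan $\mathcal{N}(P)$ is the fan whose maximal cones are $(\mathbb{R}_+(P-v))^{\circ}$ for $v$ ranging over the vertices of $P$, where $\mathbb{R}_+X$ is the set of nonnegative linear combinations of elements of $X$ and $C^{\circ}=\{x:x\cdot y\ge0\text{ for all }y\in C\}$. *)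

(* Defs.v *)
From mathcomp Require Import all_boot all_order all_algebra.
From mathcomp Require Import boolp classical_sets reals.
Set Implicit Arguments. Unset Strict Implicit. Unset Printing Implicit Defensive.
Import Order.TTheory GRing.Theory Num.Theory.
Local Open Scope ring_scope.
Local Open Scope classical_set_scope.

Section Polytopes.
Variables (R : realType) (n : nat).
Notation vec := 'rV[R]_n.

Definition dotv (x y : vec) : R := \sum_(i < n) x ord0 i * y ord0 i.

Definition conv_hull (X : set vec) : set vec :=
  [set x | exists (k : nat) (lam : 'I_k -> R) (p : 'I_k -> vec),
     (forall i, 0 <= lam i) /\ \sum_(i < k) lam i = 1 /\
     (forall i, X (p i)) /\ x = \sum_(i < k) lam i *: p i].

Definition cone_hull (X : set vec) : set vec :=
  [set x | exists (k : nat) (lam : 'I_k -> R) (p : 'I_k -> vec),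
     (forall i, 0 <= lam i) /\
     (forall i, X (p i)) /\ x = \sum_(i < k) lam i *: p i].

Definition dual_cone (C : set vec) : set vec :=
  [set x | forall y, C y -> 0 <= dotv x y].

Definition cross_polytope : set vec :=
  conv_hull [set x | exists i : 'I_n,
                       x = delta_mx ord0 i \/ x = - delta_mx ord0 i].

Definition translate (z : vec) (X : set vec) : set vec :=
  [set y | exists2 x, X x & y = z + x].

Definition aff_indep (k : nat) (p : 'I_k.+1 -> vec) : bool :=
  row_free (\matrix_(i < k) (p (lift ord0 i) - p ord0)).

Definition aff_dim_eq (S : set vec) (d : nat) : Prop :=
  (exists p : 'I_d.+1 -> vec, (forall i, S (p i)) /\ aff_indep p) /\
  ~ (exists p : 'I_d.+2 -> vec, (forall i, S (p i)) /\ aff_indep p).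

Definition is_vertex (P : set vec) (v : vec) : Prop :=
  P v /\ exists c : vec, forall x, P x -> x <> v -> dotv c v < dotv c x.

Definition cone_face (C F : set vec) : Prop :=
  exists a : vec, (forall y, C y -> 0 <= dotv a y) /\
                  F = C `&` [set y | dotv a y = 0].

Definition normal_fan (P : set vec) : set (set vec) :=
  [set F | exists v, is_vertex P v /\
     cone_face (dual_cone (cone_hull [set y | exists2 x, P x & y = x - v])) F].

End Polytopes.

(* Main.v *)
Require Import Defs.
From mathcomp Require Import all_boot all_order all_algebra.
From mathcomp Require Import boolp classical_sets reals.
From mathcomp Require Import ring lra.
Set Implicit Arguments. Unset Strict Implicit. Unset Printing Implicit Defensive.
Import Order.TTheory GRing.Theory Num.Theory.
Local Open Scope ring_scope.
Local Open Scope classical_set_scope.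

Section Basic.
Variables (R : realType) (n : nat).
Notation vec := 'rV[R]_n.

Definition l1 (x : vec) : R := \sum_(i < n) `|x ord0 i|.

Lemma dotvDr (c x y : vec) : dotv c (x + y) = dotv c x + dotv c y.
Proof. by rewrite /dotv -big_split /=; apply: eq_bigr => i _; rewrite mxE mulrDr. Qed.

Lemma dotvZr (c x : vec) (a : R) : dotv c (a *: x) = a * dotv c x.
Proof. by rewrite /dotv mulr_sumr; apply: eq_bigr => i _; rewrite mxE mulrCA. Qed.

Lemma dotvNr (c x : vec) : dotv c (- x) = - dotv c x.
Proof. by rewrite -scaleN1r dotvZr mulN1r. Qed.

Lemma dotvBr (c x y : vec) : dotv c (x - y) = dotv c x - dotv c y.
Proof. by rewrite dotvDr dotvNr. Qed.

Lemma dotv0r (c : vec) : dotv c 0 = 0.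
Proof. by rewrite /dotv big1 // => i _; rewrite mxE mulr0. Qed.

Lemma dotv_sumr (c : vec) k (F : 'I_k -> vec) :
  dotv c (\sum_(i < k) F i) = \sum_(i < k) dotv c (F i).
Proof.
exact: (big_morph _ (dotvDr c) (dotv0r c)).
Qed.

Lemma l1_ge0 (x : vec) : 0 <= l1 x.
Proof. by apply: sumr_ge0 => i _. Qed.

Lemma l1D (x y : vec) : l1 (x + y) <= l1 x + l1 y.
Proof.
rewrite /l1 -big_split /=; apply: ler_sum => i _; rewrite mxE; exact: ler_normD.
Qed.

Lemma l1Z (a : R) (x : vec) : l1 (a *: x) = `|a| * l1 x.
Proof. by rewrite /l1 mulr_sumr; apply: eq_bigr => i _; rewrite mxE normrM. Qed.

Lemma l1N (x : vec) : l1 (- x) = l1 x.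
Proof. by rewrite -scaleN1r l1Z normrN normr1 mul1r. Qed.

Lemma l1_sum k (lam : 'I_k -> R) (p : 'I_k -> vec) :
  (forall i, 0 <= lam i) ->
  l1 (\sum_(i < k) lam i *: p i) <= \sum_(i < k) lam i * l1 (p i).
Proof.
move=> hl; elim/big_ind2: _ => //.
- by rewrite /l1 big1 // => i _; rewrite mxE normr0.
- by move=> x1 x2 y1 y2 h1 h2; apply: le_trans (l1D _ _) _; exact: lerD.
- by move=> i _; rewrite l1Z ger0_norm.
Qed.

Lemma delta_entry (j i : 'I_n) : (delta_mx ord0 j : vec) ord0 i = (i == j)%:R.
Proof. by rewrite mxE eqxx /= eq_sym. Qed.

Lemma l1_delta (j : 'I_n) : l1 (delta_mx ord0 j) = 1.
Proof.
rewrite /l1 (bigD1 j) //= big1 ?addr0; first by rewrite delta_entry eqxx normr1.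
by move=> i /negbTE hij; rewrite delta_entry hij normr0.
Qed.

Lemma split_lsh m k (i : 'I_m) : split (lshift k i) = inl i.
Proof. exact: (unsplitK (inl i)). Qed.
Lemma split_rsh m k (i : 'I_k) : split (rshift m i) = inr i.
Proof. exact: (unsplitK (inr i)). Qed.

Lemma cross_l1 : (0 < n)%N -> @cross_polytope R n = [set x | l1 x <= 1].
Proof.
move=> n0; apply/seteqP; split => x /=.
  move=> [k [lam [p [hl [hs [hp ->]]]]]].
  apply: le_trans (l1_sum p hl) _; rewrite -hs le_eqVlt; apply/orP; left; apply/eqP.
  apply: eq_bigr => i _; have [j [->|->]] := hp i; by rewrite ?l1N l1_delta mulr1.
move=> hx.
pose r := (1 - l1 x) / (n + n)%:R.
have r0 : 0 <= r by apply: divr_ge0; [rewrite subr_ge0 | rewrite ler0n].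
pose lam := fun (j : 'I_(n + n)) => match split j with
  | inl i => (`|x ord0 i| + x ord0 i) / 2 + r
  | inr i => (`|x ord0 i| - x ord0 i) / 2 + r end.
pose p := fun (j : 'I_(n + n)) => match split j with
  | inl i => (delta_mx ord0 i : vec)
  | inr i => - (delta_mx ord0 i : vec) end.
exists (n + n)%N, lam, p; split; [|split; [|split]].
- move=> j; rewrite /lam; case: (split j) => i; apply: addr_ge0 => //;
  apply: divr_ge0 => //; have := ler_norm (x ord0 i); have := ler_norm (- x ord0 i);
  rewrite normrN; lra.
- rewrite big_split_ord /= /lam.
  under eq_bigr do rewrite split_lsh.
  under [X in _ + X = _]eq_bigr do rewrite split_rsh.
  rewrite !big_split /= -addrA [X in _ + X]addrC !addrA -big_split /=.
  have -> : \sum_(i < n) ((`|x ord0 i| + x ord0 i) / 2 + (`|x ord0 i| - x ord0 i) / 2) = l1 x.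
    by apply: eq_bigr => i _; field.
  rewrite -addrA -big_split /= sumr_const card_ord -mulr2n.
  rewrite -mulrnA mulnC muln2 -addnn -mulr_natr /r mulfVK; first by rewrite addrC subrK.
  by rewrite pnatr_eq0 addn_eq0 andbb -lt0n.
- by move=> j; rewrite /p; case: (split j) => i; exists i; [left|right].
- rewrite big_split_ord /= /lam /p.
  under eq_bigr do rewrite split_lsh.
  under [X in _ = _ + X]eq_bigr do rewrite split_rsh.
  apply/matrixP => a b; rewrite ord1 !mxE !summxE.
  rewrite [X in _ = _ + X](bigD1 b) //= (bigD1 b) //=.
  rewrite !big1; first last.
  + by move=> i /negbTE h; rewrite !mxE eqxx /= eq_sym h ?mulr0 ?oppr0 ?mulr0.
  + by move=> i /negbTE h; rewrite !mxE eqxx /= eq_sym h ?mulr0 ?oppr0 ?mulr0.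
  rewrite !mxE !eqxx /= !addr0; field.
  done.
Qed.

End Basic.

Section Fan.
Variables (R : realType) (n : nat).
Notation vec := 'rV[R]_n.

Definition Pb (b : vec) : set vec := [set x | l1 x <= 1 /\ l1 (x - b) <= 1].

Lemma inter_Pb (b : vec) : (0 < n)%N ->
  @cross_polytope R n `&` translate b (@cross_polytope R n) = Pb b.
Proof.
move=> n0; rewrite cross_l1 //; apply/seteqP; split => x /=.
  move=> [h1 [y h2 e]]; split => //; by rewrite e (addrC b) addrK.
move=> [h1 h2]; split => //; exists (x - b) => //; by rewrite addrC subrK.
Qed.

Definition NC (S : set vec) (v : vec) : set vec :=
  [set c | forall x, S x -> dotv c v <= dotv c x].

Lemma dual_cone_NC (S : set vec) v :
  dual_cone (cone_hull [set y | exists2 x, S x & y = x - v]) = NC S v.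
Proof.
apply/seteqP; split => c /=.
  move=> hc x Sx; have := hc (x - v).
  rewrite dotvBr subr_ge0; apply.
  exists 1%N, (fun _ => 1), (fun _ => x - v); split; [by []|split].
    by move=> i; exists x.
  by rewrite big_ord1 scale1r.
move=> hc y [k [lam [p [hl [hp ->]]]]].
rewrite dotv_sumr; apply: sumr_ge0 => i _; rewrite dotvZr; apply: mulr_ge0 => //.
by have [x Sx ->] := hp i; rewrite dotvBr subr_ge0; apply: hc.
Qed.

Lemma fan_eq (P Q : set vec) :
  (forall v, is_vertex P v -> exists v', is_vertex Q v' /\ NC P v = NC Q v') ->
  (forall v, is_vertex Q v -> exists v', is_vertex P v' /\ NC Q v = NC P v') ->
  normal_fan P = normal_fan Q.
Proof.
move=> h1 h2; apply/seteqP; split => F /= [v [hv hF]]; rewrite dual_cone_NC in hF.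
  have [v' [hv' e]] := h1 v hv; exists v'; split => //; by rewrite dual_cone_NC -e.
have [v' [hv' e]] := h2 v hv; exists v'; split => //; by rewrite dual_cone_NC -e.
Qed.

End Fan.

Section Ev.
Variable (R : realType).
Definition ev (Q : R -> Prop) := exists2 t0, 0 < t0 & forall t, 0 < t -> t <= t0 -> Q t.

Definition mn (a b : R) := if a <= b then a else b.
Lemma mn_pos a b : 0 < a -> 0 < b -> 0 < mn a b.
Proof. by rewrite /mn; case: ifP. Qed.
Lemma mn_l a b : mn a b <= a.
Proof. by rewrite /mn; case: ifP => // /negbT; rewrite -ltNge => /ltW. Qed.
Lemma mn_r a b : mn a b <= b.
Proof. by rewrite /mn; case: ifP. Qed.

Lemma ev_and Q1 Q2 : ev Q1 -> ev Q2 -> ev (fun t => Q1 t /\ Q2 t).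
Proof.
move=> [t1 p1 h1] [t2 p2 h2]; exists (mn t1 t2); first exact: mn_pos.
move=> t t0 ht; split; [apply: h1 | apply: h2] => //; apply: le_trans ht _;
  [exact: mn_l | exact: mn_r].
Qed.

Lemma ev_T : ev (fun _ => True).
Proof. by exists 1. Qed.

Lemma ev_seq (I : eqType) (s : seq I) (Q : I -> R -> Prop) :
  (forall i, ev (Q i)) -> ev (fun t => forall i, i \in s -> Q i t).
Proof.
move=> h; elim: s => [|a s IH]; first by exists 1.
have [t0 p0 h0] := ev_and (h a) IH; exists t0 => // t ht1 ht2 i.
rewrite inE => /orP [/eqP -> | hi]; have [] := h0 t ht1 ht2 => //.
by move=> _; apply.
Qed.

Lemma ev_all (I : finType) (Q : I -> R -> Prop) :
  (forall i, ev (Q i)) -> ev (fun t => forall i, Q i t).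
Proof.
move=> h; have [t0 p0 h0] := ev_seq (enum I) h; exists t0 => // t ht1 ht2 i.
by apply: h0 => //; rewrite mem_enum.
Qed.

Lemma ev_ex Q : ev Q -> exists t, 0 < t /\ Q t.
Proof. by move=> [t0 p0 h]; exists t0; split => //; apply: h. Qed.
End Ev.

Section Patt.
Variables (R : realType) (n : nat).
Notation vec := 'rV[R]_n.

Definition sgv (y : vec) : vec := \row_i Num.sg (y ord0 i).

Definition Ds (s d : vec) : R :=
  \sum_(i < n) (if s ord0 i == 0 then `|d ord0 i| else s ord0 i * d ord0 i).

Lemma l1_sgv (y : vec) : l1 y = dotv (sgv y) y.
Proof. by apply: eq_bigr => i _; rewrite mxE normrEsg. Qed.

Lemma coord_sub (y d : R) :
  (if Num.sg y == 0 then `|d| else Num.sg y * d) <= `|y + d| - `|y|.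
Proof.
rewrite sgr_cp0; case: eqP => [->|hy]; first by rewrite add0r normr0 subr0.
have hs : `|Num.sg y| = 1 by rewrite normr_sg; move/eqP: hy => ->.
rewrite lerBrDl [`|y|]normrEsg -mulrDr; apply: le_trans (ler_norm _) _.
by rewrite normrM hs mul1r.
Qed.

Lemma subgrad (y d : vec) : l1 y + Ds (sgv y) d <= l1 (y + d).
Proof.
rewrite -lerBrDl /l1 -sumrB; apply: ler_sum => i _; rewrite !mxE; exact: coord_sub.
Qed.

Lemma coord_exact (y d : R) : ev (fun t =>
  `|y + t * d| = `|y| + t * (if Num.sg y == 0 then `|d| else Num.sg y * d)).
Proof.
rewrite sgr_cp0; case: eqP => [->|hy].
  by exists 1 => // t ht _; rewrite add0r normr0 add0r normrM gtr0_norm.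
have py : 0 < `|y| by rewrite normr_gt0; apply/eqP.
exists (`|y| / (`|d| + 1)); first by apply: divr_gt0 => //; apply: ltr_pwDr.
move=> t ht; rewrite ler_pdivlMr; last by apply: ltr_pwDr.
move=> htd.
have h1 : t * `|d| < `|y| by nra.
have h2 : - (t * `|d|) <= t * d by have := ler_norm (- d); rewrite normrN; nra.
have h3 : t * d <= t * `|d| by have := ler_norm d; nra.
case: (ltrgtP y 0) => hy'; last by move: hy; rewrite hy'.
  rewrite (ltr0_norm hy') ltr0_sg // in h1 *; rewrite ltr0_norm; first by ring.
  lra.
rewrite (gtr0_norm hy') gtr0_sg // in h1 *; rewrite gtr0_norm; first by ring.
lra.
Qed.

Lemma l1_exact (y d : vec) :
  ev (fun t => l1 (y + t *: d) = l1 y + t * Ds (sgv y) d).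
Proof.
have [t0 p0 h] := ev_all (fun i => coord_exact (y ord0 i) (d ord0 i)).
exists t0 => // t ht1 ht2; rewrite /l1 /Ds mulr_sumr -big_split /=.
by apply: eq_bigr => i _; rewrite !mxE h.
Qed.

Lemma l1_slack (y d : vec) : l1 y < 1 -> ev (fun t => l1 (y + t *: d) <= 1).
Proof.
move=> hy; have hd := l1_ge0 d.
exists ((1 - l1 y) / (l1 d + 1)); first by apply: divr_gt0; [rewrite subr_gt0 | lra].
move=> t ht; rewrite ler_pdivlMr; last by lra.
move=> htd; apply: le_trans (l1D _ _) _; rewrite l1Z gtr0_norm //; nra.
Qed.

Lemma comp_ev (y d : vec) : l1 y <= 1 -> (l1 y = 1 -> Ds (sgv y) d <= 0) ->
  ev (fun t => l1 (y + t *: d) <= 1).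
Proof.
rewrite le_eqVlt => /orP [/eqP e h|]; last by move=> hy _; exact: l1_slack.
have [t0 p0 hh] := l1_exact y d; exists t0 => // t ht1 ht2.
rewrite hh // e; have := h e; nra.
Qed.

Lemma step (b v d : vec) : Pb b v ->
  (l1 v = 1 -> Ds (sgv v) d <= 0) -> (l1 (v - b) = 1 -> Ds (sgv (v - b)) d <= 0) ->
  exists t, 0 < t /\ Pb b (v + t *: d).
Proof.
move=> [h1 h2] hA hB.
have := ev_ex (ev_and (comp_ev h1 hA) (comp_ev h2 hB)).
move=> [t [ht [e1 e2]]]; exists t; split => //; split => //.
by rewrite addrAC.
Qed.

Definition patt (b v b' v' : vec) :=
  [/\ (l1 v = 1 <-> l1 v' = 1), (l1 v = 1 -> sgv v = sgv v'),
      (l1 (v - b) = 1 <-> l1 (v' - b') = 1) &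
      (l1 (v - b) = 1 -> sgv (v - b) = sgv (v' - b'))].

Lemma patt_sym b v b' v' : patt b v b' v' -> patt b' v' b v.
Proof.
move=> [h1 h2 h3 h4]; split.
- exact: iff_sym h1.
- by move=> e; rewrite (h2 (proj2 h1 e)).
- exact: iff_sym h3.
- by move=> e; rewrite (h4 (proj2 h3 e)).
Qed.

Lemma transfer b v b' v' : Pb b v -> Pb b' v' -> patt b v b' v' ->
  forall x, Pb b' x -> exists t, 0 < t /\ Pb b (v + t *: (x - v')).
Proof.
move=> hv hv' [p1 p2 p3 p4] x [hx1 hx2]; apply: step => //.
  move=> e; rewrite (p2 e); have := subgrad v' (x - v').
  have -> : v' + (x - v') = x by rewrite addrC subrK.
  rewrite (proj1 p1 e); lra.
move=> e; rewrite (p4 e); have := subgrad (v' - b') (x - v').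
have -> : v' - b' + (x - v') = x - b' by rewrite addrC addrA subrK.
rewrite (proj1 p3 e); lra.
Qed.

Lemma NC_transfer b v b' v' : Pb b v -> Pb b' v' -> patt b v b' v' ->
  forall c, NC (Pb b) v c -> NC (Pb b') v' c.
Proof.
move=> hv hv' hp c hc x hx.
have [t [ht hP]] := transfer hv hv' hp hx.
have := hc _ hP; rewrite dotvDr dotvZr dotvBr; nra.
Qed.

Lemma vertex_transfer b v b' v' : Pb b v -> Pb b' v' -> patt b v b' v' ->
  is_vertex (Pb b) v -> is_vertex (Pb b') v'.
Proof.
move=> hv hv' hp [_ [c hc]]; split => //; exists c => x hx hxv.
have [t [ht hP]] := transfer hv hv' hp hx.
have hne : v + t *: (x - v') <> v.
  move=> /(congr1 (fun w => w - v)); rewrite subrr addrC addKr => /eqP.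
  by rewrite scaler_eq0 subr_eq0 gt_eqF //= => /eqP.
have := hc _ hP hne; rewrite dotvDr dotvZr dotvBr; nra.
Qed.

Lemma NC_eq b v b' v' : Pb b v -> Pb b' v' -> patt b v b' v' ->
  NC (Pb b) v = NC (Pb b') v'.
Proof.
move=> hv hv' hp; apply/seteqP; split => c.
  exact: NC_transfer.
by apply: NC_transfer => //; apply: patt_sym.
Qed.

End Patt.

Section RL.
Variable R : realType.
Implicit Types a c s mu L : R.

Lemma crit s a L mu : (s = 1 \/ s = -1) -> 0 < mu -> mu * L < 2 -> `|a| <= L ->
  (`|s - mu * a| + mu * (L - `|a|) < 1 <-> L < 2 * (s * a)).
Proof.
move=> hs hmu hL ha.
have hmL : mu * `|a| <= mu * L by rewrite ler_pM2l.
case: hs => ->; rewrite ?mul1r ?mulN1r.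
- case: (lerP 0 a) => h0.
  + rewrite (ger0_norm h0) in ha hmL *.
    case: (lerP 0 (1 - mu * a)) => h1.
    * rewrite (ger0_norm h1); split; [nra|nra].
    * rewrite (ltr0_norm h1); split; [nra|nra].
  + rewrite (ltr0_norm h0) in ha hmL *.
    rewrite ger0_norm; last by nra.
    split; nra.
- case: (lerP 0 a) => h0.
  + rewrite (ger0_norm h0) in ha hmL *.
    rewrite ltr0_norm; last by nra.
    split; nra.
  + rewrite (ltr0_norm h0) in ha hmL *.
    case: (lerP 0 (-1 - mu * a)) => h1.
    * rewrite (ger0_norm h1); split; nra.
    * rewrite (ltr0_norm h1); split; nra.
Qed.

Lemma sg_same a c : 0 < `|a| + `|a - c| - `|c| -> Num.sg a = Num.sg (a - c) /\ a != 0.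
Proof.
move=> h.
have ha : a != 0.
  by apply/eqP => e; move: h; rewrite e sub0r normrN normr0 add0r subrr ltxx.
have hb : a - c != 0.
  apply/eqP => e; move: h; have -> : c = a by lra.
  by rewrite subrr normr0 addr0 subrr ltxx.
split => //.
case: (ltrgtP a 0) => ha'; last by move: ha; rewrite ha' eqxx.
- case: (ltrgtP (a - c) 0) => hb'; last by move: hb; rewrite hb' eqxx.
  + by rewrite !ltr0_sg.
  + exfalso; move: h; rewrite (ltr0_norm ha') (gtr0_norm hb') ltr0_norm; lra.
- case: (ltrgtP (a - c) 0) => hb'; last by move: hb; rewrite hb' eqxx.
  + exfalso; move: h; rewrite (gtr0_norm ha') (ltr0_norm hb') gtr0_norm; lra.
  + by rewrite !gtr0_sg.
Qed.

Lemma between a c : `|a| + `|a - c| = `|c| -> Num.sg c * a = `|a|.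
Proof.
move=> e.
case: (ltrgtP a 0) => ha; last by rewrite ha mulr0 normr0.
- case: (lerP 0 c) => hc.
    exfalso; move: e; rewrite (ltr0_norm ha) (ger0_norm hc) ltr0_norm; lra.
  by rewrite ltr0_sg // mulN1r ltr0_norm.
- case: (lerP c 0) => hc.
    exfalso; move: e; rewrite (gtr0_norm ha) (ler0_norm hc) gtr0_norm; lra.
  by rewrite gtr0_sg // mul1r gtr0_norm.
Qed.

Lemma ge_half a c : `|a| + `|a - c| - `|c| <= 2 * `|a| /\ `|a| + `|a - c| - `|c| <= 2 * `|a - c|.
Proof.
have h1 : `|a - c| <= `|a| + `|c| := ler_normB a c.
have h2 : `|a| <= `|a - c| + `|c| by have := ler_normD (a - c) c; rewrite subrK.
split; lra.
Qed.
End RL.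

Section Vert.
Variables (R : realType) (n : nat).
Notation vec := 'rV[R]_n.
Notation e j := (delta_mx ord0 j : vec).

Lemma dotv_delta (s : vec) j : dotv s (e j) = s ord0 j.
Proof.
rewrite /dotv (bigD1 j) //= big1 ?addr0; first by rewrite delta_entry eqxx mulr1.
by move=> i /negbTE h; rewrite delta_entry h mulr0.
Qed.

Lemma Ds_dot (s d : vec) : (forall k, s ord0 k = 0 -> d ord0 k = 0) -> Ds s d = dotv s d.
Proof.
move=> h; apply: eq_bigr => k _; case: eqP => // /h ->; by rewrite normr0 mulr0.
Qed.

Lemma sgv_entry (y : vec) i : sgv y ord0 i = Num.sg (y ord0 i).
Proof. by rewrite mxE. Qed.

Lemma line_free (b v d : vec) : is_vertex (Pb b) v -> d != 0 ->
  (l1 v = 1 -> Ds (sgv v) d <= 0 /\ Ds (sgv v) (- d) <= 0) ->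
  (l1 (v - b) = 1 -> Ds (sgv (v - b)) d <= 0 /\ Ds (sgv (v - b)) (- d) <= 0) -> False.
Proof.
move=> hv hd hA hB; have [Pv [c hc]] := hv.
have [t1 [ht1 P1]] := step Pv (fun e => proj1 (hA e)) (fun e => proj1 (hB e)).
have [t2 [ht2 P2]] := step Pv (fun e => proj2 (hA e)) (fun e => proj2 (hB e)).
have ne t : 0 < t -> forall w, w != 0 -> v + t *: w <> v.
  move=> ht w hw /(congr1 (fun u => u - v)); rewrite subrr addrC addKr => /eqP.
  by rewrite scaler_eq0 gt_eqF //= (negbTE hw).
have := hc _ P1 (ne _ ht1 _ hd).
have hd' : - d != 0 by rewrite oppr_eq0.
have := hc _ P2 (ne _ ht2 _ hd').
rewrite !dotvDr !dotvZr dotvNr; nra.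
Qed.

Lemma delta_neq0 j : e j != 0.
Proof.
apply/negP => /eqP /matrixP /(_ ord0 j); rewrite delta_entry eqxx mxE => /eqP.
by rewrite oner_eq0.
Qed.

Lemma some_tight (b v : vec) : (0 < n)%N -> is_vertex (Pb b) v ->
  l1 v = 1 \/ l1 (v - b) = 1.
Proof.
move=> n0 hv; case: (pselect (l1 v = 1)) => [|h1]; first by left.
case: (pselect (l1 (v - b) = 1)) => [|h2]; first by right.
exfalso; apply: (line_free hv (delta_neq0 (Ordinal n0))) => //.
Qed.

Lemma Ds_pair (y : vec) i j : i != j -> y ord0 i != 0 -> y ord0 j != 0 ->
  let d := Num.sg (y ord0 i) *: e i - Num.sg (y ord0 j) *: e j in
  Ds (sgv y) d <= 0 /\ Ds (sgv y) (- d) <= 0.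
Proof.
move=> hij hi hj d.
have hz : forall k, sgv y ord0 k = 0 -> d ord0 k = 0.
  move=> k; rewrite sgv_entry => /eqP; rewrite sgr_eq0 => /eqP hk.
  rewrite /d !mxE !eqxx /=.
  have -> : (k == i) = false by apply/eqP => ek; move: hi; rewrite -ek hk eqxx.
  have -> : (k == j) = false by apply/eqP => ek; move: hj; rewrite -ek hk eqxx.
  by rewrite !mulr0 subrr.
have hz' : forall k, sgv y ord0 k = 0 -> (- d) ord0 k = 0.
  by move=> k hk; rewrite mxE (hz k hk) oppr0.
have e0 : dotv (sgv y) d = 0.
  rewrite /d dotvBr !dotvZr !dotv_delta !sgv_entry.
  by rewrite -!expr2 !sqr_sg hi hj subrr.
by rewrite (Ds_dot hz) (Ds_dot hz') dotvNr e0 oppr0.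
Qed.

Lemma pair_neq0 (y : vec) i j : i != j -> y ord0 i != 0 ->
  Num.sg (y ord0 i) *: e i - Num.sg (y ord0 j) *: e j != 0.
Proof.
move=> hij hi; apply/negP => /eqP /matrixP /(_ ord0 i) /eqP.
rewrite !mxE !eqxx /= (negbTE hij) mulr0 subr0 mulr1 sgr_eq0.
by rewrite (negbTE hi).
Qed.

Lemma single (y : vec) : l1 y = 1 ->
  (forall i j, i != j -> y ord0 i != 0 -> y ord0 j != 0 -> False) ->
  exists j, y = Num.sg (y ord0 j) *: e j /\ y ord0 j != 0.
Proof.
move=> hl hp.
have [j hj] : exists j, y ord0 j != 0.
  apply/not_existsP => h; move: hl; rewrite /l1 big1 => [e|i _].
    by move: (@oner_neq0 R); rewrite e eqxx.
  by have /negP := h i; rewrite negbK => /eqP ->; rewrite normr0.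
exists j; split => //.
have hk : forall k, k != j -> y ord0 k = 0.
  move=> k hkj; case: (eqVneq (y ord0 k) 0) => // hk; exfalso; exact: (hp k j hkj hk hj).
have hyj : `|y ord0 j| = 1.
  rewrite -hl /l1 (bigD1 j) //= big1 ?addr0 // => k hkj; by rewrite hk // normr0.
apply/matrixP => a k; rewrite ord1 !mxE eqxx /=.
case: (eqVneq k j) => [->|hkj]; last by rewrite (hk _ hkj) mulr0.
by rewrite mulr1 {1}(numEsg (y ord0 j)) hyj mulr1.
Qed.

Lemma onlyA_shape (b v : vec) : is_vertex (Pb b) v -> l1 v = 1 -> l1 (v - b) < 1 ->
  exists j, v = Num.sg (v ord0 j) *: e j /\ v ord0 j != 0.
Proof.
move=> hv hA hB; apply: single => // i j hij hi hj.
apply: (line_free hv (pair_neq0 hij hi)).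
  by move=> _; apply: Ds_pair.
by move=> ee; move: hB; rewrite ee ltxx.
Qed.

Lemma onlyB_shape (b v : vec) : is_vertex (Pb b) v -> l1 (v - b) = 1 -> l1 v < 1 ->
  exists j, v - b = Num.sg ((v - b) ord0 j) *: e j /\ (v - b) ord0 j != 0.
Proof.
move=> hv hB hA; apply: single => // i j hij hi hj.
apply: (line_free hv (pair_neq0 hij hi)).
  by move=> ee; move: hA; rewrite ee ltxx.
by move=> _; apply: Ds_pair.
Qed.

Lemma l1_cut (y : vec) j : l1 y = `|y ord0 j| + \sum_(i < n | i != j) `|y ord0 i|.
Proof. by rewrite /l1 (bigD1 j). Qed.

Lemma l1_delta_sub (s mu : R) (z : vec) j : 0 <= mu ->
  l1 (s *: e j - mu *: z) = `|s - mu * z ord0 j| + mu * (l1 z - `|z ord0 j|).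
Proof.
move=> hmu; rewrite (l1_cut _ j) (l1_cut z j) addrAC subrr add0r mulr_sumr.
congr (_ + _); first by rewrite !mxE !eqxx /= ?mulr1 ?mulr1n.
apply: eq_bigr => i /negbTE h; rewrite !mxE eqxx /= h mulr0 sub0r normrN normrM.
by rewrite ger0_norm.
Qed.

End Vert.

Section Twin.
Variables (R : realType) (n : nat).
Notation vec := 'rV[R]_n.
Notation e j := (delta_mx ord0 j : vec).

Lemma sg_pm (x : R) : x != 0 -> Num.sg x = 1 \/ Num.sg x = -1.
Proof.
move=> hx; case: (ltrgtP x 0) => h; [right; exact: ltr0_sg | left; exact: gtr0_sg |].
by move: hx; rewrite h eqxx.
Qed.

Lemma l1Zp (mu : R) (z : vec) : 0 <= mu -> l1 (mu *: z) = mu * l1 z.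
Proof. by move=> h; rewrite l1Z ger0_norm. Qed.

Lemma norm_le_l1 (y : vec) j : `|y ord0 j| <= l1 y.
Proof.
rewrite (l1_cut y j) lerDl; apply: sumr_ge0 => i _; exact: normr_ge0.
Qed.

Lemma homo (y : vec) k (r et : R) : l1 y = 1 -> et <= `|y ord0 k| -> y ord0 k != 0 ->
  0 < r -> r * (1 - et) < 1 ->
  sgv (r *: y + ((1 - r) * Num.sg (y ord0 k)) *: e k) = sgv y /\
  l1 (r *: y + ((1 - r) * Num.sg (y ord0 k)) *: e k) = 1.
Proof.
move=> hl het hk hr hre.
set s := Num.sg (y ord0 k).
have ss : s * s = 1 by rewrite /s -expr2 sqr_sg hk.
have hsg : sgv (r *: y + ((1 - r) * s) *: e k) = sgv y.
  apply/matrixP => a i; rewrite ord1 !mxE eqxx /=.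
  case: (eqVneq i k) => [->|hik].
    rewrite mulr1 {1}(numEsg (y ord0 k)) -/s.
    have -> : r * (s * `|y ord0 k|) + (1 - r) * s = s * (r * `|y ord0 k| + (1 - r)) by ring.
    have hy := norm_le_l1 y k.
    have hp : 0 < r * `|y ord0 k| + (1 - r) by nra.
    by rewrite sgrM (gtr0_sg hp) mulr1 /s sgr_id.
  have -> : (false%:R : R) = 0 by [].
  by rewrite mulr0 addr0 sgrM gtr0_sg // mul1r.
split => //.
rewrite l1_sgv hsg dotvDr !dotvZr dotv_delta -l1_sgv hl sgv_entry -/s.
by rewrite -mulrA ss; ring.
Qed.

Lemma pigeon (F : 'I_n -> R) : (0 < n)%N ->
  exists k, (\sum_(i < n) F i) / n%:R <= F k.
Proof.
move=> n0; apply/not_existsP => h.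
have hlt : forall k, F k < (\sum_(i < n) F i) / n%:R.
  by move=> k; rewrite ltNge; apply/negP => /(h k).
set c := (\sum_(i < n) F i) / n%:R.
have : \sum_(i < n) F i < \sum_(i < n) c.
  rewrite (bigD1 (Ordinal n0)) //= [X in _ < X](bigD1 (Ordinal n0)) //=.
  apply: ltr_leD; first exact: hlt.
  by apply: ler_sum => i _; apply: ltW.
rewrite sumr_const card_ord /c -(mulr_natr ((\sum_(i < n) F i) / n%:R) n) divfK ?ltxx //.
by rewrite pnatr_eq0 -lt0n.
Qed.

Variable z : vec.
Definition eta (mu : R) := (2 - mu * l1 z) / (2 * n%:R).

Lemma both_twin (mu mu1 : R) (v : vec) : (0 < n)%N -> 0 < mu -> 0 < mu1 ->
  mu * l1 z < 2 -> mu1 / mu * (1 - eta mu) < 1 ->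
  Pb (mu *: z) v -> l1 v = 1 -> l1 (v - mu *: z) = 1 ->
  exists v', Pb (mu1 *: z) v' /\ patt (mu *: z) v (mu1 *: z) v'.
Proof.
move=> n0 hmu hmu1 hL hr Pv hA hB.
set b := mu *: z.
pose g (i : 'I_n) : R := `|v ord0 i| + `|v ord0 i - b ord0 i| - `|b ord0 i|.
have hsum : \sum_(i < n) g i = 2 - mu * l1 z.
  rewrite /g !sumrB big_split /= -/(l1 v) -/(l1 b).
  have -> : \sum_(i < n) `|v ord0 i - b ord0 i| = l1 (v - b).
    by apply: eq_bigr => i _; rewrite !mxE.
  by rewrite hA hB /b l1Zp ?ltW.
have [k hk] := pigeon g n0.
rewrite hsum in hk.
have hn : 0 < n%:R :> R by rewrite ltr0n.
have het : 0 < eta mu by apply: divr_gt0; [lra | rewrite mulr_gt0].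
have hgk : 2 * eta mu <= g k.
  apply: le_trans hk; rewrite le_eqVlt; apply/orP; left; apply/eqP.
  rewrite /eta; field; by rewrite pnatr_eq0 -lt0n.
have hg0 : 0 < g k by lra.
have [hs hv0] := @sg_same R _ _ hg0.
have [h1 h2] := @ge_half R (v ord0 k) (b ord0 k).
set r := mu1 / mu.
have hr0 : 0 < r by apply: divr_gt0.
have hyb : (v - b) ord0 k = v ord0 k - b ord0 k by rewrite !mxE.
have hbk0 : (v - b) ord0 k != 0.
  rewrite hyb -normr_gt0; rewrite /g in hgk; lra.
have hek : eta mu <= `|v ord0 k| by rewrite /g in hgk; lra.
have hekb : eta mu <= `|(v - b) ord0 k| by rewrite hyb; rewrite /g in hgk; lra.
have [sv lv] := homo hA hek hv0 hr0 hr.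
have [sb lb] := homo hB hekb hbk0 hr0 hr.
exists (r *: v + ((1 - r) * Num.sg (v ord0 k)) *: e k).
have ev' : r *: v + ((1 - r) * Num.sg (v ord0 k)) *: e k - mu1 *: z =
    r *: (v - b) + ((1 - r) * Num.sg ((v - b) ord0 k)) *: e k.
  rewrite hyb -hs /b scalerBr scalerA /r divfK ?gt_eqF //.
  by rewrite addrAC.
split; first by split; [rewrite lv | rewrite ev' lb].
split.
- by rewrite lv hA.
- by move=> _; rewrite sv.
- by rewrite ev' lb hB.
- by move=> _; rewrite ev' sb.
Qed.

End Twin.

Section Twin2.
Variables (R : realType) (n : nat) (z : 'rV[R]_n).
Notation vec := 'rV[R]_n.
Notation e j := (delta_mx ord0 j : vec).

Lemma twin (mu mu1 : R) (v : vec) : (0 < n)%N -> 0 < mu -> 0 < mu1 ->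
  mu * l1 z < 2 -> mu1 * l1 z < 2 -> mu1 / mu * (1 - eta z mu) < 1 ->
  is_vertex (Pb (mu *: z)) v ->
  exists v', is_vertex (Pb (mu1 *: z)) v' /\ NC (Pb (mu *: z)) v = NC (Pb (mu1 *: z)) v'.
Proof.
move=> n0 hmu hmu1 hL hL1 hr hv.
have Pv := hv.1.
suff [v' [Pv' hp]] : exists v', Pb (mu1 *: z) v' /\ patt (mu *: z) v (mu1 *: z) v'.
  by exists v'; split; [exact: vertex_transfer Pv Pv' hp hv | exact: NC_eq].
have hzj j : `|z ord0 j| <= l1 z := norm_le_l1 z j.
case: (some_tight n0 hv) => [hA|hB].
- case: (pselect (l1 (v - mu *: z) = 1)) => hB; first exact: (both_twin n0 hmu hmu1 hL hr Pv hA hB).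
  have hB' : l1 (v - mu *: z) < 1 by rewrite lt_neqAle Pv.2 andbT; apply/eqP.
  have [j [ev hj]] := onlyA_shape hv hA hB'.
  have hs := sg_pm hj.
  have hB1 : l1 (v - mu1 *: z) < 1.
    move: hB'; rewrite ev !l1_delta_sub ?ltW // => h.
    apply/(proj2 (@crit R _ _ _ _ hs hmu1 hL1 (hzj j))).
    exact: (proj1 (@crit R _ _ _ _ hs hmu hL (hzj j)) h).
  exists v; split; first by split; [exact: Pv.1 | exact: ltW].
  split => //.
  + by split => h; exfalso; [move: hB' | move: hB1]; rewrite h ltxx.
- case: (pselect (l1 v = 1)) => hA; first exact: (both_twin n0 hmu hmu1 hL hr Pv hA hB).
  have hA' : l1 v < 1 by rewrite lt_neqAle Pv.1 andbT; apply/eqP.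
  have [j [ev hj]] := onlyB_shape hv hB hA'.
  set s := Num.sg ((v - mu *: z) ord0 j) in ev.
  have hs : (- s = 1 \/ - s = -1).
    by rewrite /s; case: (sg_pm hj) => ->; [right | left; rewrite opprK].
  have key w : l1 (w *: z + s *: e j) = l1 ((- s) *: e j - w *: z).
    by rewrite -l1N opprD scaleNr addrC.
  have ev2 : v = mu *: z + s *: e j by rewrite -ev addrC subrK.
  have hA1 : l1 (mu1 *: z + s *: e j) < 1.
    move: hA'; rewrite ev2 !key !l1_delta_sub ?ltW // => h.
    apply/(proj2 (@crit R _ _ _ _ hs hmu1 hL1 (hzj j))).
    exact: (proj1 (@crit R _ _ _ _ hs hmu hL (hzj j)) h).
  have ev3 : mu1 *: z + s *: e j - mu1 *: z = v - mu *: z by rewrite ev addrC addKr.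
  exists (mu1 *: z + s *: e j); split.
    by split; [exact: ltW | rewrite ev3 hB].
  split.
  + by split => h; exfalso; [move: hA' | move: hA1]; rewrite h ltxx.
  + by move=> h; exfalso; move: hA'; rewrite h ltxx.
  + by rewrite ev3.
  + by rewrite ev3.
Qed.

End Twin2.

Section Full.
Variables (R : realType) (n : nat) (z : 'rV[R]_n).
Notation vec := 'rV[R]_n.

Lemma on_face (x : vec) : 2 <= l1 z -> Pb z x -> dotv (sgv z) x = 1.
Proof.
move=> hz [h1 h2].
pose g (i : 'I_n) : R := `|x ord0 i| + `|x ord0 i - z ord0 i| - `|z ord0 i|.
have g0 i : 0 <= g i.
  rewrite /g subr_ge0; have := ler_normB (x ord0 i) (x ord0 i - z ord0 i).
  by have -> : x ord0 i - (x ord0 i - z ord0 i) = z ord0 i by ring.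
have hs : \sum_(i < n) g i = l1 x + l1 (x - z) - l1 z.
  rewrite /g sumrB big_split /= /l1; do 2 congr (_ + _).
  by apply: eq_bigr => i _; rewrite !mxE.
have hge : 0 <= \sum_(i < n) g i by apply: sumr_ge0 => i _; exact: g0.
have hs0 : \sum_(i < n) g i = 0.
  apply/eqP; rewrite eq_le hge andbT hs; lra.
have hl : l1 x = 1.
  move: hge; rewrite hs; lra.
rewrite -hl /l1 /dotv; apply: eq_bigr => i _; rewrite mxE.
apply: between; have := psumr_eq0P (fun i _ => g0 i) hs0 (i := i) isT.
rewrite /g; lra.
Qed.

Lemma fulldim : aff_dim_eq (Pb z) n -> l1 z < 2.
Proof.
move=> [[p [hp hind]] _]; rewrite ltNge; apply/negP => hz.
set M := \matrix_(i < n) (p (lift ord0 i) - p ord0) in hind.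
have hM : M *m (sgv z)^T = 0.
  apply/matrixP => i a; rewrite ord1 !mxE.
  have := on_face hz (hp (lift ord0 i)); have := on_face hz (hp ord0).
  have -> : \sum_j M i j * (sgv z)^T j ord0 = dotv (sgv z) (p (lift ord0 i) - p ord0).
    by apply: eq_bigr => j _; rewrite !mxE mulrC.
  rewrite dotvBr => -> ->; by rewrite subrr.
have : (sgv z)^T = 0.
  have hu : M \in unitmx by rewrite -row_free_unit.
  by rewrite -(mulKmx hu (sgv z)^T) hM mulmx0.
move=> /matrixP h.
have : l1 z = 0.
  rewrite /l1 big1 // => i _; have := h i ord0; rewrite !mxE => /eqP.
  by rewrite sgr_eq0 => /eqP ->; rewrite normr0.
lra.
Qed.
End Full.


Unset Implicit Arguments. Set Strict Implicit.

Theorem lemma6p5 (R : realType) (n : nat) (z : 'rV[R]_n) :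
  aff_dim_eq (@cross_polytope R n `&` translate z (@cross_polytope R n)) n ->
  exists2 eps : R, 0 < eps &
    forall lam : R, 1 - eps < lam < 1 + eps ->
      normal_fan (@cross_polytope R n `&` translate (lam *: z) (@cross_polytope R n))
      = normal_fan (@cross_polytope R n `&` translate z (@cross_polytope R n)).
Proof.
move=> hdim.
case: (posnP n) => [n0|n0].
  exists 1 => // lam _; have -> : lam *: z = z.
    by apply/matrixP => a [j hj]; exfalso; move: hj; rewrite n0.
  by [].
rewrite inter_Pb // in hdim; have hL := fulldim hdim.
have hL0 := l1_ge0 z.
have hN : 1 <= n%:R :> R by rewrite ler1n.
set L := l1 z in hL hL0.
have eta_id mu : eta z mu = eta z 1 + (1 - mu) * (L / (2 * n%:R)).
  rewrite /eta -/L; field; rewrite pnatr_eq0 -lt0n //.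
set th := eta z 1 in eta_id.
set q := L / (2 * n%:R) in eta_id.
have hth : 0 < th by rewrite /th /eta -/L; apply: divr_gt0; [lra | rewrite mulr_gt0 // ltr0n].
have hq0 : 0 <= q by rewrite /q; apply: divr_ge0; [lra | rewrite mulr_ge0 // ler0n].
have hsum : th + q = n%:R^-1.
  rewrite /th /q /eta -/L; field; rewrite pnatr_eq0 -lt0n //.
have hinv : n%:R^-1 <= 1 :> R by rewrite invr_le1 // ?unitfE ?pnatr_eq0 -?lt0n // ltr0n.
have hq1 : q < 1 by lra.
have hmuL mu : mu * L < 2 <-> mu * q < th + q.
  have e1 : mu * L = (2 * n%:R) * (mu * q).
    rewrite /q; field; rewrite pnatr_eq0 -lt0n //.
  have e2 : 2 = (2 * n%:R) * (th + q).
    rewrite hsum; field; rewrite pnatr_eq0 -lt0n //.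
  have h2n : 0 < 2 * n%:R :> R by rewrite mulr_gt0 // ltr0n.
  rewrite e1; split => h; nra.
exists th => // lam /andP [h1 h2].
have hlam : 0 < lam by lra.
have hLl : lam * L < 2 by apply/hmuL; nra.
have hL1 : 1 * L < 2 by rewrite mul1r.
rewrite !inter_Pb // -{2}(scale1r z).
apply: fan_eq => v hv.
- apply: (twin n0 hlam ltr01 hLl hL1) => //.
  rewrite eta_id -/th mul1r mulrC ltr_pdivrMr // mul1r; nra.
- apply: (twin n0 ltr01 hlam hL1 hLl) => //.
  by rewrite divr1 -/th; nra.
Qed.
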